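(* Let $n$ be a positive integer and $0<\phi<\infty$. For integers $r,k\ge 0$ with $k+r\le n$ define $$L(r,k) = \log\binom{n}{k+r} + (n-k-r)\log\phi + \log S(k+r,k),$$ with $\log 0 = -\infty$. Then $L(0,0)=n\log\phi$; $L(r,0)=-\infty$ for $1\le r\le n$; $L(0,k)=\log\binom{n}{k}+(n-k)\log\phi$ for $0\le k\le n$; and for all integers $r\ge1$, $k\ge1$ with $k+r\le n$, $$L(r,k) = \log(n-k-r+1) - \log(k+r) - \log\phi + \mathrm{logsumexp}\big(\log k + L(r-1,k),\ L(r,k-1)\big).$$ Furthermore, for $0\le k\le n$ and $0\le r\le n-k$, $$\log \mathrm{Spillage}(r\mid n,k,\phi) = L(r,k) - \mathrm{logsumexp}\big(L(0,k),\dots,L(n-k,k)\big).$$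
   Context: $S(j,k)$ denotes the (central) Stirling numbers of the second kind (with $S(0,0)=1$, $S(j,0)=0$ for $j\ge1$). $\mathrm{logsumexp}(a_1,\dots,a_p) = \log\sum_{i=1}^p e^{a_i}$, with $e^{-\infty}=0$. The noncentral Stirling numbers of the second kind are $S(n,k,\phi) = \sum_{r=0}^{n-k}\binom{n}{k+r}\phi^{n-k-r}S(k+r,k)$, and the spillage mass function is $\mathrm{Spillage}(r\mid n,k,\phi) = \binom{n}{k+r}\phi^{n-k-r}S(k+r,k)/S(n,k,\phi)$ for $r=0,\dots,n-k$. *)

(* Defs.v *)
From mathcomp Require Import all_boot all_order all_algebra.
From mathcomp Require Import all_classical all_reals.
From mathcomp Require Import ereal topology normedtype sequences exp.
Set Implicit Arguments. Unset Strict Implicit. Unset Printing Implicit Defensive.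
Import Order.TTheory GRing.Theory Num.Theory.
Local Open Scope ring_scope.

Fixpoint stirling2 (j k : nat) : nat :=
  match j, k with
  | 0, 0 => 1
  | 0, _.+1 => 0
  | _.+1, 0 => 0
  | j'.+1, k'.+1 => (k'.+1 * stirling2 j' k + stirling2 j' k')%N
  end.

Definition elog {R : realType} (x : R) : \bar R :=
  if 0 < x then (ln x)%:E else -oo%E.

(* exp on the extended reals with e^{-oo} = 0 (value at +oo irrelevant) *)
Definition eexp {R : realType} (a : \bar R) : R :=
  match a with
  | EFin r => expR r
  | _ => 0
  end.

Definition logsumexp {R : realType} (s : seq (\bar R)) : \bar R :=
  elog (\sum_(a <- s) eexp a).

Definition ncstirling2 {R : realType} (n k : nat) (phi : R) : R :=
  \sum_(0 <= r < (n - k).+1)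
     'C(n, k + r)%:R * phi ^+ (n - k - r) * (stirling2 (k + r) k)%:R.

Definition spillage {R : realType} (n k : nat) (phi : R) (r : nat) : R :=
  'C(n, k + r)%:R * phi ^+ (n - k - r) * (stirling2 (k + r) k)%:R
  / ncstirling2 n k phi.

Definition Lfun {R : realType} (n : nat) (phi : R) (r k : nat) : \bar R :=
  (elog ('C(n, k + r)%:R : R) + ((n - k - r)%:R * ln phi)%:E
   + elog ((stirling2 (k + r) k)%:R : R))%E.

(* Main.v *)
Require Import Defs.
From mathcomp Require Import all_boot all_order all_algebra.
From mathcomp Require Import all_classical all_reals.
From mathcomp Require Import ereal topology normedtype sequences exp.
From mathcomp Require Import ring lra zify.
Import Order.TTheory GRing.Theory Num.Theory.
Local Open Scope ring_scope.

Section H.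
Variable R : realType.

Lemma elog_pos (x : R) : 0 < x -> elog x = (ln x)%:E.
Proof. by move=> x0; rewrite /elog x0. Qed.

Lemma elog0 : elog (0 : R) = -oo%E.
Proof. by rewrite /elog ltxx. Qed.

Lemma elogM (a b : R) : 0 <= a -> 0 <= b -> elog (a * b) = (elog a + elog b)%E.
Proof.
rewrite le_eqVlt => /predU1P [<-|a0].
  by rewrite mul0r elog0.
rewrite le_eqVlt => /predU1P [<-|b0].
  by rewrite mulr0 elog0 addeNy.
by rewrite !elog_pos ?mulr_gt0 // lnM.
Qed.

Lemma elog_div (a b : R) : 0 <= a -> 0 < b -> elog (a / b) = (elog a - elog b)%E.
Proof.
move=> a0 b0; rewrite elogM //; last by rewrite invr_ge0 ltW.
rewrite (@elog_pos (b^-1)) ?invr_gt0 // (@elog_pos b b0) (lnV (x:=b)) ?posrE //.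
Qed.

Lemma eexp_elog (a : R) : 0 <= a -> eexp (elog a) = a.
Proof.
rewrite le_eqVlt => /predU1P [<-|a0]; first by rewrite elog0.
by rewrite elog_pos //= lnK.
Qed.

Lemma elogX (phi : R) j : 0 < phi -> elog (phi ^+ j) = (j%:R * ln phi)%:E.
Proof. by move=> p0; rewrite elog_pos ?exprn_gt0 // lnXn // mulr_natl. Qed.

Definition T n (phi : R) r k : R :=
  'C(n, k + r)%:R * phi ^+ (n - k - r) * (stirling2 (k + r) k)%:R.

Lemma T_ge0 n phi r k : 0 < phi -> 0 <= T n phi r k.
Proof. by move=> p0; rewrite /T !mulr_ge0 ?exprn_ge0 ?ler0n // ltW. Qed.

Lemma LfunE n phi r k : 0 < phi -> Lfun n phi r k = elog (T n phi r k).
Proof.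
move=> p0; have p0' := ltW p0.
rewrite /Lfun /T elogM ?mulr_ge0 ?exprn_ge0 ?ler0n //.
by rewrite elogM ?exprn_ge0 ?ler0n // elogX.
Qed.

Lemma logsumexpE (s : seq R) : all (fun x => 0 <= x) s ->
  logsumexp [seq elog x | x <- s] = elog (\sum_(x <- s) x).
Proof.
move=> H; rewrite /logsumexp big_map; congr elog.
elim: s H => [|x s IH] /=; first by rewrite !big_nil.
by case/andP=> x0 H; rewrite !big_cons IH // eexp_elog.
Qed.

Lemma stirling_lt j k : (j < k)%N -> stirling2 j k = 0%N.
Proof.
elim: j k => [|j IH] [|k] // H.
by rewrite /= (IH k.+1 (ltnW H)) (IH k H) muln0.
Qed.

Lemma stirling_diag k : stirling2 k k = 1%N.
Proof. by elim: k => //= k IH; rewrite stirling_lt // IH muln0. Qed.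

End H.

Theorem theorem5 (R : realType) (n : nat) (phi : R) :
  (0 < n)%N -> 0 < phi ->
  [/\ Lfun n phi 0 0 = (n%:R * ln phi)%:E,
      (forall r : nat, (1 <= r <= n)%N -> Lfun n phi r 0 = -oo%E),
      (forall k : nat, (k <= n)%N ->
         Lfun n phi 0 k = (elog ('C(n, k)%:R : R) + ((n - k)%:R * ln phi)%:E)%E),
      (forall r k : nat, (1 <= r)%N -> (1 <= k)%N -> (k + r <= n)%N ->
         Lfun n phi r k =
           (elog ((n - k - r + 1)%:R : R) - elog ((k + r)%:R : R) - (ln phi)%:E
            + logsumexp [:: elog (k%:R : R) + Lfun n phi r.-1 k;
                            Lfun n phi r k.-1])%E)
    & (forall k r : nat, (k <= n)%N -> (r <= n - k)%N ->
         elog (spillage n k phi r) =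
           (Lfun n phi r k
            - logsumexp [seq Lfun n phi i k | i <- iota 0 (n - k).+1])%E)].
Proof.
move=> n0 p0; split.
- by rewrite LfunE // /T /= bin0 !subn0 mul1r mulr1 elogX.
- by move=> [|r] // _; rewrite LfunE // /T add0n /= mulr0 elog0.
- move=> k kn; rewrite /Lfun addn0 subn0 stirling_diag.
  by rewrite (@elog_pos R 1%:R) // ln1 adde0.
- move=> [|r] [|k] // _ _ H.
  rewrite !LfunE // -elogM ?ler0n ?T_ge0 //.
  rewrite /logsumexp !big_cons big_nil (@eexp_elog R _ (T_ge0 _ _ _ _ _ p0)).
  rewrite (@eexp_elog R _ (mulr_ge0 (ler0n _ _) (T_ge0 _ _ _ _ _ p0))) addr0.
  rewrite -(@elog_pos R phi p0) -elog_div; [|by rewrite ler0n|by rewrite ltr0n addnS].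
  rewrite -elog_div; [|by rewrite divr_ge0 ?ler0n|exact p0].
  rewrite -elogM; [|by rewrite divr_ge0 ?divr_ge0 ?ler0n ?ltW|].
    2: by apply: addr_ge0; [apply: mulr_ge0; [exact: ler0n|exact: T_ge0]|exact: T_ge0].
  congr elog => /=.
  set j := (k + r.+1)%N.
  have hj : (j < n)%N by rewrite /j; lia.
  set e := (n - j.+1)%N.
  have e1 : (k.+1 + r.+1 = j.+1)%N by rewrite /e /j; lia.
  have e2 : (k.+1 + r = j)%N by rewrite /e /j; lia.
  have e3 : (n - k.+1 - r.+1 = e)%N by rewrite /e /j; lia.
  have e4 : (n - k.+1 - r = e.+1)%N by rewrite /e /j; lia.
  have e5 : (n - k - r.+1 = e.+1)%N by rewrite /e /j; lia.
  have e6 : (n - k.+1 - r.+1 + 1 = e.+1)%N by rewrite /e /j; lia.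
  rewrite /T e6 e1 e2 e3 e4 e5 -/j.
  have hb : (j.+1 * 'C(n, j.+1) = e.+1 * 'C(n, j))%N.
    by rewrite mul_bin_left /e; congr (_ * _)%N; lia.
  have hb' : ('C(n, j.+1)%:R = e.+1%:R * 'C(n, j)%:R / j.+1%:R :> R).
    by rewrite -natrM -hb natrM mulrAC divff ?mul1r // pnatr_eq0.
  rewrite hb' /= natrD natrM exprS.
  have pn : phi != 0 by rewrite gt_eqF.
  have jn : (j.+1)%:R != 0 :> R by rewrite pnatr_eq0.
  field.
  by rewrite pn /= -mulrS.
- move=> k r kn rk.
  have -> : [seq Lfun n phi i k | i <- iota 0 (n - k).+1] =
      [seq elog x | x <- [seq T R n phi i k | i <- iota 0 (n - k).+1]].
    by rewrite -map_comp; apply: eq_map => i /=; exact: LfunE.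
  rewrite logsumexpE; last by apply/allP => x /mapP [i _ ->]; exact: T_ge0.
  rewrite big_map LfunE // -elog_div; first last.
  - rewrite /= big_cons ltr_pwDl //; last first.
      by apply: sumr_ge0 => i _; exact: T_ge0.
    rewrite /T addn0 subn0 stirling_diag mulr1 mulr_gt0 ?exprn_gt0 //.
    by rewrite ltr0n bin_gt0.
  - exact: T_ge0.
  congr elog; rewrite /spillage /ncstirling2 /T; congr (_ / _).
Qed.
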